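(* Let $\Sigma=b^2M_nQ\Psi Q^\top M_n\in\mathbb R^{n\times n}$ be the steady-state covariance of the observables (notation in the context), with $n\ge2$. Then for every $i\in\{1,\dots,n\}$, the $(n-1)\times(n-1)$ principal submatrix obtained from $\Sigma$ by deleting its $i$-th row and $i$-th column is invertible; consequently every principal submatrix of $\Sigma$ of size at most $n-1$ is invertible.
   Context: $L$ is the Laplacian of a connected undirected simple graph with positive edge weights, $L=Q\Lambda Q^\top$, $Q=[q_1|\dots|q_n]$ orthogonal, $q_1=\mathbf 1_n/\sqrt n$, $\Lambda=\mathrm{diag}(0,\lambda_2,\dots,\lambda_n)$ with $0<\lambda_2\le\dots\le\lambda_n$; the delay satisfies $0\le\tau<\pi/(2\lambda_n)$; $b\neq0$; $M_n=I_n-\frac1n\mathbf 1_n\mathbf 1_n^\top$; $\Psi=\mathrm{diag}(0,\psi(\lambda_2),\dots,\psi(\lambda_n))$ with $\psi(\lambda)=\frac{\cos(\lambda\tau)}{2\lambda(1-\sin(\lambda\tau))}$. *)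

(* Defs.v *)
From HB Require Import structures.
From mathcomp Require Import all_boot all_order all_algebra.
From mathcomp Require Import all_classical all_reals.
From mathcomp Require Import trigo.
Set Implicit Arguments. Unset Strict Implicit. Unset Printing Implicit Defensive.
Import Order.TTheory GRing.Theory Num.Theory.
Local Open Scope ring_scope.

Section Defs.
Variable R : realType.

(* Weighted simple graph on 'I_n given by a weight matrix W:
   W i j > 0 iff {i,j} is an edge (with weight W i j), W i j = 0 otherwise. *)
Definition weighted_simple_graph n (W : 'M[R]_n) : Prop :=
  W^T = W /\ (forall i, W i i = 0) /\ (forall i j, 0 <= W i j).

Definition graph_connected n (W : 'M[R]_n) : Prop :=
  forall i j : 'I_n, connect (fun a b : 'I_n => 0 < W a b) i j.

Definition laplacian n (W : 'M[R]_n) : 'M[R]_n :=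
  \matrix_(i, j) (if i == j then \sum_k W i k else - W i j).

Definition centering n : 'M[R]_n := 1%:M - (n%:R)^-1 *: const_mx 1.

Definition psi (tau lam : R) : R :=
  cos (lam * tau) / (2 * lam * (1 - sin (lam * tau))).

(* Psi = diag(0, psi(lam_2), ..., psi(lam_n)); index 0 is the first one. *)
Definition Psi n (tau : R) (lam : 'I_n -> R) : 'M[R]_n :=
  diag_mx (\row_k (if val k == 0%N then 0 else psi tau (lam k))).

Definition Sigma n (b tau : R) (Q : 'M[R]_n) (lam : 'I_n -> R) : 'M[R]_n :=
  b ^+ 2 *: (centering n *m Q *m Psi tau lam *m Q^T *m centering n).

Definition psubmx n (S : {set 'I_n}) (A : 'M[R]_n) : 'M[R]_#|S| :=
  \matrix_(a, c) A (enum_val a) (enum_val c).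

End Defs.

(* Main.v *)
Require Import Defs.
From HB Require Import structures.
From mathcomp Require Import all_boot all_order all_algebra.
From mathcomp Require Import all_classical all_reals.
From mathcomp Require Import trigo.
From mathcomp Require Import ring lra.
Import Order.TTheory GRing.Theory Num.Theory.
Set Implicit Arguments. Unset Strict Implicit.
Local Open Scope ring_scope.

Section H.
Variable R : realType.

Lemma sumsq_eq0 m (v : 'cV[R]_m) : (v^T *m v) 0 0 = 0 -> v = 0.
Proof.
rewrite mxE; under eq_bigr do rewrite mxE -expr2.
move=> h; apply/matrixP => i j; rewrite (ord1 j) !mxE.
have := psumr_eq0P (P := predT) (F := fun k => v k 0 ^+ 2) _ h (i := i).
move=> /(_ (fun k _ => sqr_ge0 _)) /(_ isT) /eqP.
by rewrite sqrf_eq0 => /eqP.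
Qed.

Lemma sum_delta n (f : 'I_n -> R) k : \sum_l f l * (l == k)%:R = f k.
Proof.
rewrite (bigD1 k) //= eqxx mulr1 big1 ?addr0 // => l /negbTE ->.
by rewrite mulr0.
Qed.

Lemma sum_deltaC n (f : 'I_n -> R) k : \sum_l (k == l)%:R * f l = f k.
Proof.
rewrite (bigD1 k) //= eqxx mul1r big1 ?addr0 // => l; rewrite eq_sym => /negbTE ->.
by rewrite mul0r.
Qed.

Lemma centering_mul n (x : 'cV[R]_n) j :
  (centering R n *m x) j 0 = x j 0 - n%:R^-1 * \sum_l x l 0.
Proof.
rewrite /centering mulmxBl mul1mx -scalemxAl !mxE; congr (_ - _ * _).
by apply: eq_bigr => l _; rewrite mxE mul1r.
Qed.

Lemma centering_sum n (x : 'cV[R]_n) : (0 < n)%N ->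
  \sum_j (centering R n *m x) j 0 = 0.
Proof.
move=> n0; under eq_bigr do rewrite centering_mul.
rewrite sumrB sumr_const card_ord -mulr_natr.
have nz : (n%:R : R) != 0 by rewrite pnatr_eq0 -lt0n.
by field.
Qed.

Lemma centering_tr n : (centering R n)^T = centering R n.
Proof. by rewrite /centering linearB /= tr_scalar_mx linearZ /= trmx_const. Qed.

Definition Pm n (S : {set 'I_n}) : 'M[R]_(n, #|S|) :=
  \matrix_(j, a) ((j == enum_val a)%:R).

Lemma psubmxE n (S : {set 'I_n}) (A : 'M[R]_n) :
  psubmx S A = (Pm S)^T *m A *m Pm S.
Proof.
apply/matrixP => a c; rewrite !mxE.
under eq_bigr do rewrite !mxE.
rewrite sum_delta.
under eq_bigr do rewrite !mxE eq_sym.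
by rewrite sum_deltaC.
Qed.

Lemma psi_pos (tau l L : R) : 0 <= tau -> 0 < l -> l <= L ->
  tau < pi / (2 * L) -> 0 < psi tau l.
Proof.
move=> t0 l0 lL ht.
have L0 : 0 < L by apply: lt_le_trans lL.
have pi0 := pi_gt0 R.
rewrite ltr_pdivlMr in ht; last by rewrite mulr_gt0.
have t1 : 0 <= l * tau by rewrite mulr_ge0 // ltW.
have t2 : l * tau < pi / 2.
  have : l * tau <= L * tau by rewrite ler_wpM2r.
  lra.
have hc : 0 < cos (l * tau).
  apply: cos_gt0_pihalf; apply/andP; split; lra.
have hs : sin (l * tau) < 1.
  rewrite lt_neqAle sin_le1 andbT; apply/eqP => hs1.
  have := cos2Dsin2 (l * tau); rewrite hs1 expr1n => h2.
  have : cos (l * tau) ^+ 2 = 0 by lra.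
  by move=> /eqP; rewrite sqrf_eq0 => /eqP hc0; rewrite hc0 ltxx in hc.
rewrite /psi divr_gt0 //.
rewrite !mulr_gt0 //; lra.
Qed.

Lemma core n (Q : 'M[R]_n) (lam : 'I_n -> R) tau b (S : {set 'I_n}) :
  (0 < n)%N -> Q^T *m Q = 1%:M ->
  (forall i j : 'I_n, val j = 0%N -> Q i j = 1 / Num.sqrt (n%:R)) ->
  (forall k : 'I_n, (0 < val k)%N -> 0 < psi tau (lam k)) -> b != 0 ->
  (#|S| < n)%N ->
  psubmx S (Sigma b tau Q lam) \in unitmx.
Proof.
move=> n0 hQ hQ0 hpsi hb hS.
pose d := fun k : 'I_n => if val k == 0%N then 0 else psi tau (lam k).
have d0 k : 0 <= d k.
  rewrite /d; case: eqP => // k0; apply: ltW; apply: hpsi; rewrite lt0n; exact/eqP.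
have dp k : (0 < val k)%N -> 0 < d k.
  by move=> k0; rewrite /d ifF; [exact: hpsi | apply/negbTE; rewrite -lt0n].
pose E := diag_mx (\row_k Num.sqrt (d k)).
have EE : E *m E = Psi tau lam.
  rewrite /Psi mul_diag_mx; apply/matrixP => i j; rewrite !mxE.
  case: eqVneq => [->|]; rewrite ?mulr1n ?mulr0n ?mulr0 // -expr2 sqr_sqrtr //.
pose M := centering R n.
pose F := b *: (E *m Q^T *m M).
have SF : Sigma b tau Q lam = F^T *m F.
  rewrite /F /Sigma -/M linearZ /= linearZ /= -scalemxAl scalerA -expr2.
  congr (_ *: _).
  by rewrite !trmx_mul trmxK tr_diag_mx centering_tr -/E -EE !mulmxA.
rewrite -row_free_unit; apply: inj_row_free => u hu.
rewrite psubmxE SF in hu.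
pose x := Pm S *m u^T.
have hw : F *m x = 0.
  apply: sumsq_eq0.
  have : (u *m ((Pm S)^T *m (F^T *m F) *m Pm S)) *m u^T = 0 by rewrite hu mul0mx.
  rewrite /x !trmx_mul trmxK !mulmxA => ->; by rewrite mxE.
have hy : Q^T *m (M *m x) = 0.
  move: hw; rewrite /F -scalemxAl => /eqP; rewrite scalemx_eq0 (negbTE hb) /=.
  move=> /eqP hEy; apply/matrixP => k j; rewrite (ord1 j) [RHS]mxE.
  have := congr1 (fun A : 'cV[R]_n => A k 0) hEy; rewrite /= -!mulmxA mul_diag_mx !mxE.
  case: (posnP (val k)) => [k0|kp].
    move=> _; under eq_bigr do rewrite mxE (hQ0 _ _ k0).
    by rewrite -mulr_sumr centering_sum // mulr0.
  move=> /eqP; rewrite mulf_eq0 => /orP [|/eqP //].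
  by rewrite gt_eqF // sqrtr_gt0 dp.
have hMx : M *m x = 0.
  have QQ : Q *m Q^T = 1%:M := mulmx1C hQ.
  by rewrite -(mul1mx (M *m x)) -QQ -mulmxA hy mulmx0.
have [i iS] : exists i, i \notin S.
  have : (0 < #|~: S|)%N.
    move: hS; rewrite (cardsCs S) card_ord; case: #|~: S| => //; by rewrite subn0 ltnn.
  by case/card_gt0P => i; rewrite !inE => ?; exists i.
have xi : x i 0 = 0.
  rewrite mxE; apply: big1 => a _; rewrite !mxE.
  case: eqP => [e|]; last by rewrite mul0r.
  by move: iS; rewrite e enum_valP.
have hm j : x j 0 = n%:R^-1 * \sum_l x l 0.
  by apply/eqP; rewrite -subr_eq0 -centering_mul -/M hMx mxE.
have xall j : x j 0 = 0 by rewrite hm -(hm i) xi.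
apply/rowP => a; rewrite mxE.
have := xall (enum_val a); rewrite mxE.
under eq_bigr do rewrite !mxE (inj_eq enum_val_inj).
by rewrite sum_deltaC.
Qed.
End H.

Theorem lemma2 (R : realType) (n : nat) (W Q : 'M[R]_n) (lam : 'I_n -> R)
    (tau b : R) :
  (2 <= n)%N ->
  weighted_simple_graph W -> graph_connected W ->
  Q^T *m Q = 1%:M ->
  laplacian W = Q *m diag_mx (\row_k lam k) *m Q^T ->
  (forall i j : 'I_n, val j = 0%N -> Q i j = 1 / Num.sqrt (n%:R)) ->
  (forall k : 'I_n, val k = 0%N -> lam k = 0) ->
  (forall k : 'I_n, (0 < val k)%N -> 0 < lam k) ->
  (forall k l : 'I_n, (val k <= val l)%N -> lam k <= lam l) ->
  0 <= tau ->
  (forall k : 'I_n, val k = n.-1 -> tau < pi / (2 * lam k)) ->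
  b != 0 ->
  (forall i : 'I_n, psubmx (~: [set i]) (Sigma b tau Q lam) \in unitmx) /\
  (forall S : {set 'I_n}, (#|S| <= n.-1)%N ->
     psubmx S (Sigma b tau Q lam) \in unitmx).
Proof.
move=> n2 _ _ hQ _ hQ0 _ hlp hmono t0 htau hb.
have n0 : (0 < n)%N by apply: leq_trans n2.
have hN : (n.-1 < n)%N by rewrite ltn_predL.
pose N : 'I_n := Ordinal hN.
have hpsi k : (0 < val k)%N -> 0 < psi tau (lam k).
  move=> kp; apply: (@psi_pos _ _ _ (lam N)) => //.
  - exact: hlp.
  - by apply: hmono; rewrite /= -ltnS prednK.
  - exact: htau.
have main (S : {set 'I_n}) : (#|S| <= n.-1)%N -> psubmx S (Sigma b tau Q lam) \in unitmx.
  move=> hS; apply: core => //; exact: leq_ltn_trans hS hN.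
split => [i|//]; apply: main; by rewrite cardsC1 card_ord.
Qed.
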